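(* In a PL+C model, suppose $\sum_{h\in\mathcal U}p_h\ge\alpha k$ for some $\alpha>1$. Then for every $i\in\mathcal U$, $$p_i\le\frac{\sum_{j\in\mathcal U}\exp(u_j)}{\exp(u_i)}\cdot\left(\Pr_{PLC}(\mathcal R_{i=1})+\frac{k(\alpha e^{1-\alpha})^k}{1-(\alpha e^{1-\alpha})^k}\right).$$
   Context: PL+C model: universe $\mathcal U=\{1,\dots,n\}$, fixed ranking length $k\le n$. Each item $h$ has a utility $u_h\in\mathbb R$ and a consideration probability $p_h\in(0,1]$. A consideration set $C$ is drawn by including each item independently with probability $p_h$, conditioned on $|C|\ge k$: $\Pr_C(C)=\frac{1}{z_{k,p}}\prod_{h\in C}p_h\prod_{h\notin C}(1-p_h)$ for $|C|\ge k$ (with $z_{k,p}$ the normalizing constant), and $0$ otherwise. Given $C$, a length-$k$ ranking $r$ has probability $\Pr_{PL}(r\mid C)=\prod_{t=1}^k \frac{\exp(u_{r_t})}{\sum_{h\in C\setminus\{r_1,\dots,r_{t-1}\}}\exp(u_h)}$ if all $r_t\in C$, else $0$. $\Pr_{PLC}(r)=\sum_C\Pr_C(C)\Pr_{PL}(r\mid C)$, and for a set $R$ of rankings $\Pr_{PLC}(R)=\sum_{r\in R}\Pr_{PLC}(r)$. $\mathcal R_{i=1}$ is the set of length-$k$ rankings with $i$ in the first position. *)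

(* Defs.v *)
From mathcomp Require Import all_boot all_order all_algebra.
From mathcomp Require Import all_classical all_reals all_analysis.
Set Implicit Arguments. Unset Strict Implicit. Unset Printing Implicit Defensive.
Import Order.TTheory GRing.Theory Num.Theory.
Local Open Scope ring_scope.

Section PLC.
Variables (R : realType) (n k : nat) (u p : 'I_n -> R).

Definition cset_weight (C : {set 'I_n}) : R :=
  (\prod_(h in C) p h) * (\prod_(h in ~: C) (1 - p h)).

Definition zkp : R := \sum_(C : {set 'I_n} | (k <= #|C|)%N) cset_weight C.

Definition PrC (C : {set 'I_n}) : R :=
  if (k <= #|C|)%N then cset_weight C / zkp else 0.

(* the set {r_1, ..., r_{t}} of items placed before position t (0-indexed) *)
Definition placed_before (r : k.-tuple 'I_n) (t : 'I_k) : {set 'I_n} :=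
  [set tnth r s | s : 'I_k & (s < t)%N].

(* Plackett-Luce probability of the length-k ranking r given C;
   rankings are tuples of pairwise distinct items *)
Definition PrPL (r : k.-tuple 'I_n) (C : {set 'I_n}) : R :=
  if uniq r && all (fun x => x \in C) r then
    \prod_(t < k) (expR (u (tnth r t)) /
       \sum_(h in C :\: placed_before r t) expR (u h))
  else 0.

Definition PrPLC (r : k.-tuple 'I_n) : R :=
  \sum_(C : {set 'I_n}) PrC C * PrPL r C.

Definition PrPLC_first (i : 'I_n) : R :=
  \sum_(r : k.-tuple 'I_n | uniq r && (ohead r == Some i)) PrPLC r.

End PLC.

(* Main.v *)
Require Import Defs.
From mathcomp Require Import all_boot all_order all_algebra.
From mathcomp Require Import all_classical all_reals all_analysis.
From mathcomp Require Import ring lra.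
Import Order.TTheory GRing.Theory Num.Theory.
Local Open Scope ring_scope.

Section Aux.
Variables (R : realType) (n : nat) (u : 'I_n -> R).

Lemma sum_tuple_cons (T : finType) m (F : m.+1.-tuple T -> R) :
  \sum_(r : m.+1.-tuple T) F r = \sum_(x : T) \sum_(t : m.-tuple T) F [tuple of x :: t].
Proof.
rewrite pair_big /= (reindex (fun q : T * m.-tuple T => [tuple of q.1 :: q.2])) //=.
exists (fun r : m.+1.-tuple T => (thead r, [tuple of behead r])).
  by move=> [x t] _ /=; congr pair; apply: val_inj.
by move=> r _; case/tupleP: r => x t /=; apply: val_inj; rewrite /= /thead tnth0.
Qed.

Lemma mem_placed m (r : m.-tuple 'I_n) (t : 'I_m) y :
  (y \in placed_before r t) = (y \in take t r).
Proof.
apply/imsetP/idP.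
  move=> [s]; rewrite inE => hs ->.
  rewrite (tnth_nth y) -(nth_take _ hs); apply: mem_nth.
  by rewrite size_take size_tuple; case: ifP => //; rewrite ltn_ord.
move=> hy.
have hts : size (take t r) = t by rewrite size_take size_tuple ltn_ord.
have hit : (index y (take t r) < t)%N.
  by rewrite -[X in (_ < X)%N]hts index_mem.
have hi : (index y (take t r) < m)%N by apply: (ltn_trans hit).
exists (Ordinal hi); first by rewrite inE.
by rewrite (tnth_nth y) /= -(nth_take _ hit) nth_index.
Qed.


Let e (h : 'I_n) := expR (u h).

Fixpoint plf (C : {set 'I_n}) (s : seq 'I_n) : R :=
  match s with
  | [::] => 1
  | x :: s' => e x / (\sum_(h in C) e h) * plf (C :\ x) s'
  end.

Lemma prod_plf m (r : m.-tuple 'I_n) C :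
  \prod_(t < m) (expR (u (tnth r t)) /
       \sum_(h in C :\: placed_before r t) expR (u h)) = plf C r.
Proof.
elim: m r C => [|m IH] r C; first by rewrite big_ord0 (tuple0 r).
case/tupleP: r => x t; rewrite big_ord_recl tnth0 /=.
congr (_ / _ * _).
  by apply: eq_bigl => h; rewrite !inE mem_placed.
rewrite -(IH t (C :\ x)); apply: eq_bigr => j _; rewrite tnthS; congr (_ / _).
apply: eq_bigl => h; rewrite !inE !mem_placed lift0 /= in_cons.
by case: (h == x); case: (h \in C); case: (h \in take j t).
Qed.

Lemma all_setD1 (C : {set 'I_n}) x (t : seq 'I_n) :
  all (fun y => y \in C :\ x) t = (x \notin t) && all (fun y => y \in C) t.
Proof.
elim: t => [|y t IH] //=; rewrite IH in_cons !inE negb_or eq_sym.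
by case: (x == y); case: (y \in C); case: (x \in t); case: (all _ t).
Qed.

Lemma sumC_gt0 (C : {set 'I_n}) x : x \in C -> 0 < \sum_(h in C) e h.
Proof.
move=> hx; rewrite (bigD1 x) //=.
have h1 : 0 < e x by rewrite /e expR_gt0.
have h2 : 0 <= \sum_(h in C | h != x) e h by apply: sumr_ge0 => h _; rewrite /e expR_ge0.
lra.
Qed.

Lemma sum_plf m : forall C : {set 'I_n}, (m <= #|C|)%N ->
  \sum_(r : m.-tuple 'I_n | uniq r && all (fun y => y \in C) r) plf C r = 1.
Proof.
elim: m => [|m IH] C hC.
  by rewrite (big_pred1 [tuple]) // => r; rewrite (tuple0 r) /= eqxx.
have [x0 hx0] : exists x, x \in C.
  by apply/set0Pn; rewrite -card_gt0; apply: leq_trans hC.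
rewrite big_mkcond sum_tuple_cons /=.
transitivity (\sum_(x in C) e x / \sum_(h in C) e h).
  rewrite [RHS]big_mkcond; apply: eq_bigr => x _.
  case: ifP => hxC; last first.
    by apply: big1 => t _ /=; rewrite andbF.
  have hC' : (m <= #|C :\ x|)%N.
    by move: hC; rewrite (cardsD1 x C) hxC.
  rewrite -[RHS]mulr1 -(IH _ hC') mulr_sumr [RHS]big_mkcond.
  apply: eq_bigr => t _; rewrite all_setD1 /=.
  by case: (x \in t); case: (uniq t); case: (all _ t).
by rewrite -mulr_suml divff // gt_eqF // (sumC_gt0 C x0 hx0).
Qed.

Lemma inner_first m (C : {set 'I_n}) i : i \in C -> (m.+1 <= #|C|)%N ->
  \sum_(r : m.+1.-tuple 'I_n | uniq r && (ohead r == Some i)) PrPL u r C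
  = e i / \sum_(h in C) e h.
Proof.
move=> hiC hC.
have hC' : (m <= #|C :\ i|)%N by move: hC; rewrite (cardsD1 i C) hiC.
rewrite big_mkcond sum_tuple_cons (bigD1 i) //= [X in _ + X]big1 ?addr0; last first.
  move=> x hx; apply: big1 => t _ /=.
  by rewrite (_ : (Some x == Some i) = false) ?andbF //; apply/eqP => -[/eqP]; rewrite (negbTE hx).
rewrite -[RHS]mulr1 -(sum_plf _ _ hC') mulr_sumr [RHS]big_mkcond.
apply: eq_bigr => t _; rewrite eqxx andbT /PrPL prod_plf /= all_setD1 hiC /=.
by case: (i \in t); case: (uniq t); case: (all _ t).
Qed.

End Aux.

Section Prob.
Variables (R : realType) (n k : nat) (p : 'I_n -> R).
Hypothesis hp : forall h, 0 < p h <= 1.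

Lemma W_ge0 C : 0 <= cset_weight p C.
Proof.
apply: mulr_ge0; apply: prodr_ge0 => h _; have := hp h; case/andP => h1 h2.
  exact: ltW.
by rewrite subr_ge0.
Qed.

Lemma W_add i (C : {set 'I_n}) : i \notin C -> p i * cset_weight p C = (1 - p i) * cset_weight p (i |: C).
Proof.
move=> hiC; rewrite /cset_weight.
rewrite [X in _ = _ * (X * _)](bigD1 i) ?setU11 //=.
rewrite [X in _ * (_ * X) = _](bigD1 i) ?inE //=.
have -> : \prod_(h in i |: C | h != i) p h = \prod_(h in C) p h.
  by apply: eq_bigl => h; rewrite !inE; case: (eqVneq h i) => [->|] /=; rewrite ?(negbTE hiC) ?andbT.
have -> : \prod_(h in ~: C | h != i) (1 - p h) = \prod_(h in ~: (i |: C)) (1 - p h).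
  by apply: eq_bigl => h; rewrite !inE negb_or andbC eq_sym.
ring.
Qed.

Definition tog (i : 'I_n) (C : {set 'I_n}) := if i \in C then C :\ i else i |: C.

Lemma togK i : involutive (tog i).
Proof.
move=> C; case: (boolP (i \in C)) => hiC.
  by rewrite {2}/tog hiC /tog setD11 finset.setD1K.
by rewrite {2}/tog (negbTE hiC) /tog setU11 finset.setU1K.
Qed.

Lemma key_prob i :
  p i * zkp k p <= \sum_(C : {set 'I_n} | (k <= #|C|)%N && (i \in C)) cset_weight p C.
Proof.
set A := \sum_(C | _) _.
rewrite /zkp (bigID (fun C : {set 'I_n} => i \in C)) /= -/A.
set B := \sum_(C | _ && ~~ _) _.
set X := \sum_(C : {set 'I_n} | (k <= #|C|)%N && (i \notin C)) cset_weight p (i |: C).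
have hB : p i * B = (1 - p i) * X.
  rewrite /B /X !mulr_sumr; apply: eq_bigr => C /andP [_ hC]; exact: W_add.
have hX : X <= A.
  rewrite /A (reindex_inj (inv_inj (togK i))) /X !big_mkcond /=.
rewrite [X in _ <= X]big_mkcond /=.   apply: ler_sum => C _; rewrite /tog; case: (boolP (i \in C)) => hiC /=.
    by rewrite andbF; case: ifP => _ //; apply: W_ge0.
  rewrite setU11 andbT cardsU1 hiC add1n.
  case: ifP => hk; first by rewrite (leq_trans hk).
  by case: ifP => _ //; apply: W_ge0.
have := hp i; case/andP => h1 h2.
nra.
Qed.

Lemma zkp_gt0 : (k <= n)%N -> 0 < zkp k p.
Proof.
move=> hkn; rewrite /zkp (bigD1 [set: 'I_n]) ?cardsT ?card_ord //=.
have h1 : 0 < cset_weight p [set: 'I_n].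
  rewrite /cset_weight finset.setCT big_set0 mulr1; apply: prodr_gt0 => h _.
  by have := hp h; case/andP.
have h2 : 0 <= \sum_(C : {set 'I_n} | (k <= #|C|)%N && (C != [set: 'I_n])) cset_weight p C.
  by apply: sumr_ge0 => C _; apply: W_ge0.
lra.
Qed.

Lemma prob_in i : (k <= n)%N -> p i <= \sum_(C : {set 'I_n} | i \in C) PrC k p C.
Proof.
move=> hkn; have hZ := zkp_gt0 hkn.
rewrite -[p i](mulfK (lt0r_neq0 hZ)).
apply: (le_trans (y := (\sum_(C : {set 'I_n} | (k <= #|C|)%N && (i \in C)) cset_weight p C) / zkp k p)).
  by rewrite ler_pM2r ?invr_gt0 // key_prob.
rewrite le_eqVlt; apply/orP; left; apply/eqP.
rewrite mulr_suml big_mkcond [RHS]big_mkcond /=; apply: eq_bigr => C _.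
by rewrite /PrC; case: (i \in C); rewrite ?andbT ?andbF.
Qed.

End Prob.

Lemma PrC_ge0 (R : realType) n k (p : 'I_n -> R) (hp : forall h, 0 < p h <= 1) (hkn : (k <= n)%N) C :
  0 <= PrC k p C.
Proof.
rewrite /PrC; case: ifP => _ //; apply: divr_ge0; first exact: (W_ge0 _ _ _ hp).
exact: ltW (zkp_gt0 _ _ _ _ hp hkn).
Qed.

Lemma PrPL_ge0 (R : realType) n k (u : 'I_n -> R) (r : k.-tuple 'I_n) C : 0 <= PrPL u r C.
Proof.
rewrite /PrPL; case: ifP => _ //; apply: prodr_ge0 => t _; apply: divr_ge0.
  exact: expR_ge0.
by apply: sumr_ge0 => h _; apply: expR_ge0.
Qed.

Theorem theorem6 (R : realType) (n k : nat) (u p : 'I_n -> R) (alpha : R)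
  (hk0 : (0 < k)%N) (hkn : (k <= n)%N)
  (hp : forall h, 0 < p h <= 1)
  (halpha : 1 < alpha)
  (hsum : alpha * k%:R <= \sum_(h : 'I_n) p h) :
  forall i : 'I_n,
    p i <= (\sum_(j : 'I_n) expR (u j)) / expR (u i) *
           (PrPLC_first k u p i +
            k%:R * (alpha * expR (1 - alpha)) ^+ k /
              (1 - (alpha * expR (1 - alpha)) ^+ k)).
Proof.
move=> i.
set S := \sum_(j : 'I_n) expR (u j).
have hei : 0 < expR (u i) := expR_gt0 (u i).
have hS : 0 < S.
  rewrite /S (bigD1 i) //=.
  have : 0 <= \sum_(j | j != i) expR (u j) by apply: sumr_ge0 => j _; apply: expR_ge0.
  lra.
set beta := alpha * expR (1 - alpha).
have hb0 : 0 <= beta by apply: mulr_ge0; [lra | apply: expR_ge0].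
have hb1 : beta <= 1.
  have h1 := expR_ge1Dx (alpha - 1).
  have h2 : expR (1 - alpha) * expR (alpha - 1) = 1.
    by rewrite -expRD (_ : 1 - alpha + (alpha - 1) = 0) ?expR0 //; lra.
  rewrite /beta -[X in _ <= X]h2 [X in _ <= X]mulrC.
  by apply: ler_wpM2r; [apply: expR_ge0 | lra].
have hterm : 0 <= k%:R * beta ^+ k / (1 - beta ^+ k).
  apply: divr_ge0; first by apply: mulr_ge0; [apply: ler0n | apply: exprn_ge0].
  by rewrite subr_ge0 exprn_ile1.
have hfirst : expR (u i) / S * p i <= PrPLC_first k u p i.
  rewrite /PrPLC_first /PrPLC exchange_big /=.
  apply: (le_trans (y := \sum_(C : {set 'I_n} | i \in C) PrC k p C * (expR (u i) / S))).
    rewrite -mulr_suml [X in _ <= X]mulrC.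
    rewrite ler_pM2l; last by apply: divr_gt0.
    exact: (prob_in _ _ _ _ hp i hkn).
  rewrite [X in X <= _]big_mkcond; apply: ler_sum => C _; rewrite -mulr_sumr.
  case: (boolP (i \in C)) => hiC; last first.
    by apply: mulr_ge0; [apply: (PrC_ge0 _ _ _ _ hp hkn) | apply: sumr_ge0 => r _; apply: PrPL_ge0].
  case: (leqP k #|C|) => hk; last first.
    by rewrite /PrC leqNgt hk /= !mul0r.
  move: hk hk0 (PrC_ge0 _ _ _ _ hp hkn C); case: k {hkn hsum hterm beta hb0 hb1} => [//|k'] hk _ hPC.
  rewrite inner_first //=; apply: ler_wpM2l => //.
  apply: ler_wpM2l; first exact: expR_ge0.
  have hC := sumC_gt0 _ _ u C i hiC.
  rewrite lef_pV2 ?posrE //.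
  rewrite /S [X in _ <= X](bigID (fun h => h \in C)) /=.
  have : 0 <= \sum_(h | h \notin C) expR (u h) by apply: sumr_ge0 => h _; apply: expR_ge0.
  lra.
have -> : p i = S / expR (u i) * (expR (u i) / S * p i).
  by field; rewrite !lt0r_neq0.
apply: ler_wpM2l; first by apply: divr_ge0; apply: ltW.
lra.
Qed.
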